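(* Under the setting below, the following formulae hold: \[ \begin{pmatrix}U_2^T\widetilde{U}_1\\ V_2^T\widetilde{V}_1\end{pmatrix} = \sum_{k=0}^{\infty} \mathcal{F}^k \begin{pmatrix}C_1\\ C_2\end{pmatrix}, \qquad \begin{pmatrix}U_1^T\widetilde{U}_2\\ V_1^T\widetilde{V}_2\end{pmatrix} = \sum_{k=0}^{\infty} \mathcal{G}^k \begin{pmatrix}C_3\\ C_4\end{pmatrix}, \] provided that $\|\mathcal{F}\|<1$ and $\|\mathcal{G}\|<1$. Here $\mathcal{F}$ and $\mathcal{G}$ are the linear operators \[ \mathcal{F}\begin{pmatrix}X_1\\ X_2\end{pmatrix} = \begin{pmatrix}F_U^{21}\circ(\Sigma_2\alpha_{22}^T X_1)+F_U^{21}\circ(\alpha_{22}X_2\widetilde\Sigma_1^T)\\ F_V^{21}\circ(\alpha_{22}^T X_1\widetilde\Sigma_1)+F_V^{21}\circ(\Sigma_2^T\alpha_{22}X_2)\end{pmatrix},\qquad \mathcal{G}\begin{pmatrix}X_3\\ X_4\end{pmatrix} = \begin{pmatrix}F_U^{12}\circ(\alpha_{11}X_4\widetilde\Sigma_2^T)+F_U^{12}\circ(\Sigma_1\alpha_{11}^T X_3)\\ F_V^{12}\circ(\Sigma_1^T\alpha_{11}X_4)+F_V^{12}\circ(\alpha_{11}^T X_3\widetilde\Sigma_2)\end{pmatrix}, \] and \begin{align*} C_1&=F_U^{21}\circ(\Sigma_2\alpha_{12}^TU_1^T\widetilde U_1+\alpha_{21}V_1^T\widetilde V_1\widetilde\Sigma_1^T),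 \quad C_2= F_V^{21}\circ(\alpha_{12}^TU_1^T\widetilde U_1\widetilde\Sigma_1+\Sigma_2^T\alpha_{21}V_1^T\widetilde V_1), \\ C_3&=F_U^{12}\circ(\alpha_{12}V_2^T\widetilde V_2\widetilde\Sigma_2^T+\Sigma_1\alpha_{21}^TU_2^T\widetilde U_2) ,\quad C_4= F_V^{12}\circ(\Sigma_1^T\alpha_{12}V_2^T\widetilde V_2+\alpha_{21}^T U_2^T\widetilde U_2\widetilde \Sigma_2), \end{align*} where \[ \alpha=\begin{pmatrix} \alpha_{11} & \alpha_{12} \\ \alpha_{21} & \alpha_{22} \end{pmatrix} \equiv \begin{pmatrix} U_1^T \Delta A V_1 & U_1^T \Delta A V_2 \\ U_2^T \Delta A V_1 & U_2^T \Delta A V_2 \end{pmatrix} =U^T \Delta A V. \]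
   Context: Let $A$ and $\widetilde A=A+\Delta A$ be two $n\times m$ real matrices, $A$ of rank at least $r$, with conformal full SVDs $A=U\Sigma V^T=\begin{pmatrix}U_1 & U_2\end{pmatrix}\begin{pmatrix}\Sigma_1 & \\ & \Sigma_2\end{pmatrix}\begin{pmatrix}V_1^T\\ V_2^T\end{pmatrix}$ and $\widetilde A=\widetilde U\widetilde\Sigma\widetilde V^T=\begin{pmatrix}\widetilde U_1 & \widetilde U_2\end{pmatrix}\begin{pmatrix}\widetilde\Sigma_1 & \\ & \widetilde\Sigma_2\end{pmatrix}\begin{pmatrix}\widetilde V_1^T\\ \widetilde V_2^T\end{pmatrix}$, where $U_1\in\mathbb{R}^{n,r}$, $U_2\in\mathbb{R}^{n,n-r}$, $V_1\in\mathbb{R}^{m,r}$, $V_2\in\mathbb{R}^{m,m-r}$, $\Sigma_1=\mathrm{diag}\{\sigma_1,\dots,\sigma_r\}$, $\Sigma_2$ contains $\sigma_{r+1},\dots,\sigma_{\min\{n,m\}}$ (singular values of $A$ in descending order), and similarly for $\widetilde A$ with singular values $\widetilde\sigma_i$. Assume $\sigma_r-\widetilde\sigma_{r+1}>0$ and $\widetilde\sigma_r-\sigma_{r+1}>0$. Set $\sigma_i=\widetilde\sigma_i=0$ for $i>\min\{n,m\}$. $\circ$ denotes the Hadamard (entrywise) product. $F_U^{12}\in\mathbb{R}^{r,n-r}$ has entries $(F_U^{12})_{i,j-r}=\frac{1}{\widetilde\sigma_j^2-\sigma_i^2}$, $1\le i\le r$, $r+1\le j\le n$; $F_U^{21}\in\mathbb{R}^{n-r,r}$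 has entries $(F_U^{21})_{i-r,j}=\frac{1}{\widetilde\sigma_j^2-\sigma_i^2}$, $r+1\le i\le n$, $1\le j\le r$; $F_V^{12}\in\mathbb{R}^{r,m-r}$ has entries $(F_V^{12})_{i,j-r}=\frac{1}{\widetilde\sigma_j^2-\sigma_i^2}$, $1\le i\le r$, $r+1\le j\le m$; $F_V^{21}\in\mathbb{R}^{m-r,r}$ has entries $(F_V^{21})_{i-r,j}=\frac{1}{\widetilde\sigma_j^2-\sigma_i^2}$, $r+1\le i\le m$, $1\le j\le r$. *)

(* Defs.v *)
From HB Require Import structures.
From mathcomp Require Import all_boot all_order all_algebra.
From mathcomp Require Import all_classical all_reals all_analysis.
Set Implicit Arguments. Unset Strict Implicit. Unset Printing Implicit Defensive.
Import Order.TTheory GRing.Theory Num.Theory.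
Local Open Scope ring_scope.

Section Defs.
Variable R : realType.

Definition hadamard p q (A B : 'M[R]_(p, q)) : 'M[R]_(p, q) :=
  map2_mx (fun a b => a * b) A B.

Definition frob p q (A : 'M[R]_(p, q)) : R :=
  Num.sqrt (\sum_(i < p) \sum_(j < q) A i j ^+ 2).

Definition opnorm p q (f : 'M[R]_(p, q) -> 'M[R]_(p, q)) : R :=
  sup [set x : R | exists Y : 'M[R]_(p, q), Y != 0 /\ x = frob (f Y) / frob Y].

(* The n x m "diagonal" matrix of singular values s 0, s 1, ... (0-indexed:
   s i is sigma_{i+1} of the paper). *)
Definition sing_diag n m (s : nat -> R) : 'M[R]_(n, m) :=
  \matrix_(i < n, j < m) (if (i : nat) == j then s i else 0).

Definition is_full_svd n m (A : 'M[R]_(n, m)) (U : 'M[R]_n) (V : 'M[R]_m)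
    (s : nat -> R) : Prop :=
  [/\ U^T *m U = 1%:M, V^T *m V = 1%:M,
      A = U *m sing_diag n m s *m V^T &
      [/\ (forall i, 0 <= s i),
           (forall i j, (i <= j)%N -> s j <= s i) &
           (forall i, (minn n m <= i)%N -> s i = 0)]].

Definition F12 r k (s st : nat -> R) : 'M[R]_(r, k) :=
  \matrix_(i < r, j < k) (st (r + j)%N ^+ 2 - s i ^+ 2)^-1.
Definition F21 r k (s st : nat -> R) : 'M[R]_(k, r) :=
  \matrix_(i < k, j < r) (st j ^+ 2 - s (r + i)%N ^+ 2)^-1.

Definition Fop r n2 m2 (FU21 : 'M[R]_(n2, r)) (FV21 : 'M[R]_(m2, r))
    (a22 : 'M[R]_(n2, m2)) (S2 : 'M[R]_(n2, m2)) (St1 : 'M[R]_r)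
    (Y : 'M[R]_(n2 + m2, r)) : 'M[R]_(n2 + m2, r) :=
  let X1 := usubmx Y in let X2 := dsubmx Y in
  col_mx (hadamard FU21 (S2 *m a22^T *m X1) + hadamard FU21 (a22 *m X2 *m St1^T))
         (hadamard FV21 (a22^T *m X1 *m St1) + hadamard FV21 (S2^T *m a22 *m X2)).

Definition Gop r n2 m2 (FU12 : 'M[R]_(r, n2)) (FV12 : 'M[R]_(r, m2))
    (a11 : 'M[R]_r) (S1 : 'M[R]_r) (St2 : 'M[R]_(n2, m2))
    (Y : 'M[R]_(r, n2 + m2)) : 'M[R]_(r, n2 + m2) :=
  let X3 := lsubmx Y in let X4 := rsubmx Y in
  row_mx (hadamard FU12 (a11 *m X4 *m St2^T) + hadamard FU12 (S1 *m a11^T *m X3))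
         (hadamard FV12 (S1^T *m a11 *m X4) + hadamard FV12 (a11^T *m X3 *m St2)).

End Defs.

(* Main.v *)
Require Import Defs.
From HB Require Import structures.
From mathcomp Require Import all_boot all_order all_algebra.
From mathcomp Require Import all_classical all_reals all_analysis.
From mathcomp Require Import lra.
Import Order.TTheory GRing.Theory Num.Theory.
Import numFieldTopology.Exports numFieldNormedType.Exports.
Local Open Scope ring_scope.
Local Open Scope classical_set_scope.
Section Gen.
Variable R : realType.

Lemma frob_ge0 p q (A : 'M[R]_(p,q)) : 0 <= frob A.
Proof. exact: sqrtr_ge0. Qed.

Lemma entry_le_frob p q (A : 'M[R]_(p,q)) i j : `|A i j| <= frob A.
Proof.
rewrite /frob -sqrtr_sqr; apply: ler_wsqrtr.
rewrite (bigD1 i) //= (bigD1 j) //= -addrA lerDl.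
apply: addr_ge0; first by apply: sumr_ge0 => k _; exact: sqr_ge0.
by apply: sumr_ge0 => k _; apply: sumr_ge0 => l _; exact: sqr_ge0.
Qed.

Lemma frob0 p q : frob (0 : 'M[R]_(p,q)) = 0.
Proof.
rewrite /frob big1 ?sqrtr0 // => i _; rewrite big1 // => j _.
by rewrite mxE expr0n.
Qed.

Lemma frob_eq0 p q (A : 'M[R]_(p,q)) : frob A = 0 -> A = 0.
Proof.
move=> h; apply/matrixP => i j; rewrite mxE.
by apply/normr0_eq0/eqP; rewrite eq_le normr_ge0 andbT -h entry_le_frob.
Qed.

Section Lin.
Variables (p q : nat) (f : 'M[R]_(p,q) -> 'M[R]_(p,q)).
Hypothesis fD : forall A B, f (A + B) = f A + f B.
Hypothesis fZ : forall a A, f (a *: A) = a *: f A.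

Lemma f0 : f 0 = 0.
Proof. by have := fZ 0 0; rewrite !scale0r. Qed.

Lemma f_expand Y : f Y = \sum_(k < p) \sum_(l < q) Y k l *: f (delta_mx k l).
Proof.
rewrite {1}(matrix_sum_delta Y) (big_morph f fD f0); apply: eq_bigr => k _.
by rewrite (big_morph f fD f0); apply: eq_bigr => l _; rewrite fZ.
Qed.

Lemma frob_lin_bound : exists K, 0 <= K /\ forall Y, frob (f Y) <= K * frob Y.
Proof.
pose B i j := \sum_(k < p) \sum_(l < q) `|f (delta_mx k l) i j|.
exists (Num.sqrt (\sum_i \sum_j B i j ^+ 2)); split; first exact: sqrtr_ge0.
move=> Y.
have hij i j : `|f Y i j| <= frob Y * B i j.
  rewrite f_expand summxE (le_trans (ler_norm_sum _ _ _)) // mulr_sumr.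
  apply: ler_sum => k _; rewrite summxE (le_trans (ler_norm_sum _ _ _)) // mulr_sumr.
  apply: ler_sum => l _; rewrite mxE normrM ler_wpM2r //.
  exact: entry_le_frob.
have sY : 0 <= \sum_(i < p) \sum_(j < q) Y i j ^+ 2.
  by apply: sumr_ge0 => i _; apply: sumr_ge0 => j _; exact: sqr_ge0.
have hs : \sum_(i < p) \sum_(j < q) Y i j ^+ 2 = frob Y ^+ 2.
  by rewrite /frob sqr_sqrtr.
rewrite mulrC {1 2}/frob -sqrtrM //.
apply: ler_wsqrtr; rewrite hs mulr_sumr; apply: ler_sum => i _.
rewrite mulr_sumr; apply: ler_sum => j _.
rewrite -exprMn -[f Y i j ^+ 2]real_normK ?num_real //.
by rewrite !expr2 ler_pM // ?normr_ge0 //; exact: hij.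
Qed.

Lemma opnorm_bound Y : frob (f Y) <= Num.max (opnorm f) 0 * frob Y.
Proof.
have [->|Y0] := eqVneq Y 0; first by rewrite f0 frob0 mulr0.
have fY0 : 0 < frob Y.
  by rewrite lt_def frob_ge0 andbT; apply/eqP => /frob_eq0; apply/eqP.
have h : frob (f Y) / frob Y <= opnorm f.
  apply: sup_upper_bound; last by exists Y.
  split; first by exists (frob (f Y) / frob Y), Y.
  have [K [K0 hK]] := frob_lin_bound.
  exists K => x [Z [Z0 ->]].
  have fZ0 : 0 < frob Z.
    by rewrite lt_def frob_ge0 andbT; apply/eqP => /frob_eq0; apply/eqP.
  by rewrite ler_pdivrMr.
rewrite -ler_pdivrMr //; apply: (le_trans h); by rewrite le_max lexx.
Qed.

Lemma iterD k A B : iter k f (A + B) = iter k f A + iter k f B.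
Proof. by elim: k => //= k ->; rewrite fD. Qed.

Lemma neumann X C : X = f X + C -> opnorm f < 1 ->
  (fun N : nat => \sum_(k < N) iter k f C) @ \oo --> X.
Proof.
move=> hX hf.
have hsum N : X = \sum_(k < N) iter k f C + iter N f X.
  elim: N => [|N IH]; first by rewrite big_ord0 add0r.
  rewrite {1}IH {1}hX iterD -iterSr big_ord_recr /=.
  by rewrite [f _ + _]addrC addrA.
set c := Num.max (opnorm f) 0.
have c0 : 0 <= c by rewrite le_max lexx orbT.
have c1 : c < 1 by rewrite gt_max hf ltr01.
have hN N : frob (iter N f X) <= c ^+ N * frob X.
  elim: N => [|N IH]; first by rewrite expr0 mul1r.
  rewrite iterS (le_trans (opnorm_bound _)) // exprS -mulrA ler_wpM2l //.
have hc : (GRing.exp c : R^nat) @ \oo --> 0 by apply: cvg_expr; rewrite ger0_norm.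
apply/cvgrPdist_le => e e0.
have e1 : 0 < e / (frob X + 1) by rewrite divr_gt0 // ltr_wpDl ?frob_ge0.
move/cvgrPdist_le: hc => /(_ _ e1); apply: filterS => N /= hN'.
have -> : X - \sum_(k < N) iter k f C = iter N f X.
  by rewrite {1}(hsum N) addrC addKr.
rewrite [leLHS]/Num.norm /= mx_normrE; apply: bigmax_le => [|[i j] _ /=].
  exact: ltW.
apply: le_trans; first exact: entry_le_frob. apply: (le_trans (hN N)).
move: hN'; rewrite sub0r normrN ger0_norm ?exprn_ge0 // => hN'.
have h1 := ler_wpM2r (@frob_ge0 _ _ X) hN'. rewrite (le_trans h1) //.
rewrite mulrAC ler_pdivrMr ?ltr_wpDl ?frob_ge0 // ler_wpM2l ?(ltW e0) // lerDl.
by []. Qed.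
End Lin.
End Gen.
Arguments neumann {R p q f}.
Section Alg.
Variable R : realType.

Lemma svd_eqs (n m : nat) (A dA S St : 'M[R]_(n,m)) (U Ut : 'M[R]_n) (V Vt : 'M[R]_m) :
  U^T *m U = 1%:M -> V^T *m V = 1%:M -> Ut^T *m Ut = 1%:M -> Vt^T *m Vt = 1%:M ->
  A = U *m S *m V^T -> A + dA = Ut *m St *m Vt^T ->
  (U^T *m Ut) *m (St *m St^T) - S *m S^T *m (U^T *m Ut)
    = S *m (U^T *m dA *m V)^T *m (U^T *m Ut) + (U^T *m dA *m V) *m (V^T *m Vt) *m St^T /\
  (V^T *m Vt) *m (St^T *m St) - S^T *m S *m (V^T *m Vt)
    = S^T *m (U^T *m dA *m V) *m (V^T *m Vt) + (U^T *m dA *m V)^T *m (U^T *m Ut) *m St.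
Proof.
move=> UU VV UUt VVt hA hAt.
have VV' : V *m V^T = 1%:M := mulmx1C VV.
have UU' : U *m U^T = 1%:M := mulmx1C UU.
set M := U^T *m Ut; set N := V^T *m Vt; set al := U^T *m dA *m V.
have E1 : M *m St = S *m N + al *m N.
  have h1 : Ut *m St = (A + dA) *m Vt by rewrite hAt -!mulmxA VVt mulmx1.
  rewrite /M -mulmxA h1 mulmxDl mulmxDr hA.
  congr (_ + _).
    by rewrite !mulmxA UU mul1mx /N -!mulmxA.
  by rewrite /al /N -!mulmxA (mulmxA V) VV' mul1mx.
have E2 : N *m St^T = S^T *m M + al^T *m M.
  have h2 : Vt *m St^T = (A + dA)^T *m Ut.
    by rewrite hAt !trmx_mul trmxK -!mulmxA UUt mulmx1.
  rewrite /N -mulmxA h2 linearD /= mulmxDl mulmxDr hA.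
  congr (_ + _).
    by rewrite !trmx_mul trmxK !mulmxA VV mul1mx /M -!mulmxA.
  by rewrite /al /M !trmx_mul trmxK -!mulmxA (mulmxA U) UU' mul1mx.
split.
  have -> : M *m (St *m St^T) = S *m S^T *m M + S *m al^T *m M + al *m N *m St^T.
    by rewrite mulmxA E1 mulmxDl -[S *m N *m St^T]mulmxA E2 mulmxDr !mulmxA.
  by rewrite addrC !addrA addNr add0r.
have -> : N *m (St^T *m St) = S^T *m S *m N + S^T *m al *m N + al^T *m M *m St.
  by rewrite mulmxA E2 mulmxDl -[S^T *m M *m St]mulmxA E1 mulmxDr !mulmxA.
by rewrite addrC !addrA addNr add0r.
Qed.

Lemma sing_diag_tr n m (s : nat -> R) : (sing_diag n m s)^T = sing_diag m n s.
Proof.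
apply/matrixP => i j; rewrite !mxE eq_sym.
by case: eqP => // ->.
Qed.

Lemma DDt n m (s : nat -> R) : (forall i, (minn n m <= i)%N -> s i = 0) ->
  sing_diag n m s *m (sing_diag n m s)^T = diag_mx (\row_(i < n) s i ^+ 2).
Proof.
move=> hs; apply/matrixP => i j; rewrite !mxE.
case: (ltnP i m) => him.
  rewrite (bigD1 (Ordinal him)) //= big1 ?addr0.
    rewrite !mxE /= eqxx; have [<-|hij] := eqVneq i j.
      by rewrite eqxx mulr1n expr2.
    have -> : ((j : nat) == i) = false.
      by apply/negbTE; apply: contra hij => /eqP h; apply/eqP/val_inj.
    by rewrite mulr0 mulr0n.
  move=> k hk; rewrite !mxE.
  have -> : ((i : nat) == k) = false.
    by apply/negbTE; apply: contra hk => /eqP h; apply/eqP/val_inj.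
  by rewrite mul0r.
have si0 : s i = 0 by apply: hs; apply: leq_trans (geq_minr _ _) him.
rewrite big1; first by rewrite si0 expr0n mul0rn.
by move=> k _; rewrite !mxE; case: ifP => _; rewrite ?si0 mul0r.
Qed.

Lemma DtD n m (s : nat -> R) : (forall i, (minn n m <= i)%N -> s i = 0) ->
  (sing_diag n m s)^T *m sing_diag n m s = diag_mx (\row_(i < m) s i ^+ 2).
Proof.
move=> hs; rewrite sing_diag_tr -[sing_diag n m s]sing_diag_tr DDt // => i.
by rewrite minnC; exact: hs.
Qed.

Definition hadD p q (F A B : 'M[R]_(p,q)) :
  hadamard F (A + B) = hadamard F A + hadamard F B.
Proof. by apply/matrixP => i j; rewrite !mxE mulrDr. Qed.

Definition hadZ p q (F A : 'M[R]_(p,q)) a :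
  hadamard F (a *: A) = a *: hadamard F A.
Proof. by apply/matrixP => i j; rewrite !mxE mulrCA. Qed.

Lemma FopD r n2 m2 (FU21 : 'M[R]_(n2, r)) (FV21 : 'M[R]_(m2, r))
    (a22 : 'M[R]_(n2, m2)) (S2 : 'M[R]_(n2, m2)) (St1 : 'M[R]_r) Y Z :
  Fop FU21 FV21 a22 S2 St1 (Y + Z) = Fop FU21 FV21 a22 S2 St1 Y + Fop FU21 FV21 a22 S2 St1 Z.
Proof.
rewrite /Fop /= -[Y]vsubmxK -[Z]vsubmxK add_col_mx !col_mxKu !col_mxKd.
rewrite !(mulmxDr, mulmxDl) !hadD add_col_mx.
by congr col_mx; rewrite addrACA.
Qed.

Lemma FopZ r n2 m2 (FU21 : 'M[R]_(n2, r)) (FV21 : 'M[R]_(m2, r))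
    (a22 : 'M[R]_(n2, m2)) (S2 : 'M[R]_(n2, m2)) (St1 : 'M[R]_r) a Y :
  Fop FU21 FV21 a22 S2 St1 (a *: Y) = a *: Fop FU21 FV21 a22 S2 St1 Y.
Proof.
rewrite /Fop /= -[Y]vsubmxK scale_col_mx !col_mxKu !col_mxKd.
rewrite -!scalemxAr -?scalemxAl -?scalemxAr !hadZ scale_col_mx.
by congr col_mx; rewrite scalerDr.
Qed.

Lemma GopD r n2 m2 (FU12 : 'M[R]_(r, n2)) (FV12 : 'M[R]_(r, m2))
    (a11 : 'M[R]_r) (S1 : 'M[R]_r) (St2 : 'M[R]_(n2, m2)) Y Z :
  Gop FU12 FV12 a11 S1 St2 (Y + Z) = Gop FU12 FV12 a11 S1 St2 Y + Gop FU12 FV12 a11 S1 St2 Z.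
Proof.
rewrite /Gop /= -[Y]hsubmxK -[Z]hsubmxK add_row_mx !row_mxKl !row_mxKr.
rewrite !(mulmxDr, mulmxDl) !hadD add_row_mx.
by congr row_mx; rewrite addrACA.
Qed.

Lemma GopZ r n2 m2 (FU12 : 'M[R]_(r, n2)) (FV12 : 'M[R]_(r, m2))
    (a11 : 'M[R]_r) (S1 : 'M[R]_r) (St2 : 'M[R]_(n2, m2)) a Y :
  Gop FU12 FV12 a11 S1 St2 (a *: Y) = a *: Gop FU12 FV12 a11 S1 St2 Y.
Proof.
rewrite /Gop /= -[Y]hsubmxK scale_row_mx !row_mxKl !row_mxKr.
rewrite -!scalemxAr -?scalemxAl -?scalemxAr !hadZ scale_row_mx.
by congr row_mx; rewrite scalerDr.
Qed.

Lemma acD2 (V : zmodType) (a b c d : V) : (a + b) + (c + d) = (d + b) + (c + a).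
Proof. by rewrite addrC [c + d]addrC [a + b]addrC addrACA. Qed.
Lemma acD3 (V : zmodType) (a b c d : V) : (a + b) + (c + d) = (c + a) + (d + b).
Proof. by rewrite addrC addrACA. Qed.
Lemma fracK (x a b : R) : a - b != 0 -> x = (a - b)^-1 * (x * a - b * x).
Proof. by move=> h; rewrite [b * x]mulrC -mulrBr mulrCA mulVf ?mulr1. Qed.
Lemma den_neq0 (a b c d : R) : c <= a -> d <= b -> 0 <= d -> 0 < c - b -> a ^+ 2 - d ^+ 2 != 0.
Proof. move=> h1 h2 h3 h4; rewrite gt_eqF //; nra. Qed.
End Alg.
Arguments FopD {R r n2 m2 FU21 FV21 a22 S2 St1}.
Arguments FopZ {R r n2 m2 FU21 FV21 a22 S2 St1}.
Arguments GopD {R r n2 m2 FU12 FV12 a11 S1 St2}.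
Arguments GopZ {R r n2 m2 FU12 FV12 a11 S1 St2}.
Arguments fracK {R x a b}.
Arguments svd_eqs {R n m A dA S St U Ut V Vt}.
Arguments DDt {R n m s}.
Arguments DtD {R n m s}.
Theorem theorem2p7 (R : realType) (r n2 m2 : nat)
    (A dA : 'M[R]_(r + n2, r + m2)) (U Ut : 'M[R]_(r + n2)) (V Vt : 'M[R]_(r + m2))
    (s st : nat -> R) :
  (0 < r)%N -> (r <= \rank A)%N ->
  is_full_svd A U V s -> is_full_svd (A + dA) Ut Vt st ->
  0 < s r.-1 - st r -> 0 < st r.-1 - s r ->
  let U1 := lsubmx U in let U2 := rsubmx U in
  let V1 := lsubmx V in let V2 := rsubmx V in
  let Ut1 := lsubmx Ut in let Ut2 := rsubmx Ut in
  let Vt1 := lsubmx Vt in let Vt2 := rsubmx Vt in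
  let S := sing_diag (r + n2) (r + m2) s in
  let St := sing_diag (r + n2) (r + m2) st in
  let S1 := ulsubmx S in let S2 := drsubmx S in
  let St1 := ulsubmx St in let St2 := drsubmx St in
  let alpha := U^T *m dA *m V in
  let a11 := ulsubmx alpha in let a12 := ursubmx alpha in
  let a21 := dlsubmx alpha in let a22 := drsubmx alpha in
  let FU12 := F12 r n2 s st in let FU21 := F21 r n2 s st in
  let FV12 := F12 r m2 s st in let FV21 := F21 r m2 s st in
  let F := Fop FU21 FV21 a22 S2 St1 in
  let G := Gop FU12 FV12 a11 S1 St2 in
  let C1 := hadamard FU21 (S2 *m a12^T *m (U1^T *m Ut1) + a21 *m (V1^T *m Vt1) *m St1^T) in
  let C2 := hadamard FV21 (a12^T *m (U1^T *m Ut1) *m St1 + S2^T *m a21 *m (V1^T *m Vt1)) in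
  let C3 := hadamard FU12 (a12 *m (V2^T *m Vt2) *m St2^T + S1 *m a21^T *m (U2^T *m Ut2)) in
  let C4 := hadamard FV12 (S1^T *m a12 *m (V2^T *m Vt2) + a21^T *m (U2^T *m Ut2) *m St2) in
  opnorm F < 1 -> opnorm G < 1 ->
  (fun N : nat => \sum_(k < N) iter k F (col_mx C1 C2)) @ \oo
      --> col_mx (U2^T *m Ut1) (V2^T *m Vt1) /\
  (fun N : nat => \sum_(k < N) iter k G (row_mx C3 C4)) @ \oo
      --> row_mx (U1^T *m Ut2) (V1^T *m Vt2).
Proof.
move=> r0 _ [UU VV hA [s0 sdec smin]] [UUt VVt hAt [st0 stdec stmin]] hs hst.
move=> U1 U2 V1 V2 Ut1 Ut2 Vt1 Vt2 S St S1 S2 St1 St2 alpha a11 a12 a21 a22.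
move=> FU12 FU21 FV12 FV21 F G C1 C2 C3 C4 hF hG.
have [K1 K2] := svd_eqs UU VV UUt VVt hA hAt.
rewrite -/S -/St -/alpha in K1 K2.
set M := U^T *m Ut in K1 K2; set N := V^T *m Vt in K1 K2.
have hM : M = block_mx (U1^T *m Ut1) (U1^T *m Ut2) (U2^T *m Ut1) (U2^T *m Ut2).
  by rewrite /M -{1}[U]hsubmxK -{1}[Ut]hsubmxK tr_row_mx mul_col_row.
have hN : N = block_mx (V1^T *m Vt1) (V1^T *m Vt2) (V2^T *m Vt1) (V2^T *m Vt2).
  by rewrite /N -{1}[V]hsubmxK -{1}[Vt]hsubmxK tr_row_mx mul_col_row.
have halpha : alpha = block_mx a11 a12 a21 a22 by rewrite submxK.
have hS : S = block_mx S1 0 0 S2.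
  rewrite -[S in LHS]submxK; congr block_mx; apply/matrixP => i j; rewrite !mxE /=.
  by rewrite ltn_eqF // ltn_addr.
  by rewrite gtn_eqF // ltn_addr.
have hSt : St = block_mx St1 0 0 St2.
  rewrite -[St in LHS]submxK; congr block_mx; apply/matrixP => i j; rewrite !mxE /=.
  by rewrite ltn_eqF // ltn_addr.
  by rewrite gtn_eqF // ltn_addr.
have D1 : dlsubmx (S *m alpha^T *m M + alpha *m N *m St^T) =
   S2 *m a22^T *m (U2^T *m Ut1) + a22 *m (V2^T *m Vt1) *m St1^T +
   (S2 *m a12^T *m (U1^T *m Ut1) + a21 *m (V1^T *m Vt1) *m St1^T).
  rewrite hS halpha hM hN hSt !tr_block_mx !mulmx_block add_block_mx block_mxKdl.
  rewrite !(mul0mx, mulmx0, add0r, addr0, trmx0).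
  by rewrite mulmxDl addrACA addrC.
have D2 : dlsubmx (S^T *m alpha *m N + alpha^T *m M *m St) =
   a22^T *m (U2^T *m Ut1) *m St1 + S2^T *m a22 *m (V2^T *m Vt1) +
   (a12^T *m (U1^T *m Ut1) *m St1 + S2^T *m a21 *m (V1^T *m Vt1)).
  rewrite hS halpha hM hN hSt !tr_block_mx !mulmx_block add_block_mx block_mxKdl.
  rewrite !(mul0mx, mulmx0, add0r, addr0, trmx0).
  by rewrite mulmxDl acD2.
have D3 : ursubmx (S *m alpha^T *m M + alpha *m N *m St^T) =
   a11 *m (V1^T *m Vt2) *m St2^T + S1 *m a11^T *m (U1^T *m Ut2) +
   (a12 *m (V2^T *m Vt2) *m St2^T + S1 *m a21^T *m (U2^T *m Ut2)).
  rewrite hS halpha hM hN hSt !tr_block_mx !mulmx_block add_block_mx block_mxKur.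
  rewrite !(mul0mx, mulmx0, add0r, addr0, trmx0).
  by rewrite mulmxDl acD3.
have D4 : ursubmx (S^T *m alpha *m N + alpha^T *m M *m St) =
   S1^T *m a11 *m (V1^T *m Vt2) + a11^T *m (U1^T *m Ut2) *m St2 +
   (S1^T *m a12 *m (V2^T *m Vt2) + a21^T *m (U2^T *m Ut2) *m St2).
  rewrite hS halpha hM hN hSt !tr_block_mx !mulmx_block add_block_mx block_mxKur.
  rewrite !(mul0mx, mulmx0, add0r, addr0, trmx0).
  by rewrite mulmxDl addrACA.
have P21 : U2^T *m Ut1 = dlsubmx M by rewrite hM block_mxKdl.
have Q21 : V2^T *m Vt1 = dlsubmx N by rewrite hN block_mxKdl.
have P12 : U1^T *m Ut2 = ursubmx M by rewrite hM block_mxKur.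
have Q12 : V1^T *m Vt2 = ursubmx N by rewrite hN block_mxKur.
rewrite (DDt smin) (DDt stmin) mul_mx_diag mul_diag_mx in K1.
rewrite (DtD smin) (DtD stmin) mul_mx_diag mul_diag_mx in K2.
clearbody M N.
have T1 : U2^T *m Ut1 = hadamard FU21 (S2 *m a22^T *m (U2^T *m Ut1) + a22 *m (V2^T *m Vt1) *m St1^T +
   (S2 *m a12^T *m (U1^T *m Ut1) + a21 *m (V1^T *m Vt1) *m St1^T)).
  rewrite -D1 -K1 P21 /FU21 /F21; apply/matrixP => i j; rewrite !mxE /=.
  apply: fracK; apply: (@den_neq0 R _ (s r) (st r.-1)) => //.
  - by apply: stdec; rewrite -ltnS prednK.
  - by apply: sdec; rewrite leq_addr.
have T2 : V2^T *m Vt1 = hadamard FV21 (a22^T *m (U2^T *m Ut1) *m St1 + S2^T *m a22 *m (V2^T *m Vt1) +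
   (a12^T *m (U1^T *m Ut1) *m St1 + S2^T *m a21 *m (V1^T *m Vt1))).
  rewrite -D2 -K2 Q21 /FV21 /F21; apply/matrixP => i j; rewrite !mxE /=.
  apply: fracK; apply: (@den_neq0 R _ (s r) (st r.-1)) => //.
  - by apply: stdec; rewrite -ltnS prednK.
  - by apply: sdec; rewrite leq_addr.
have T3 : U1^T *m Ut2 = hadamard FU12 (a11 *m (V1^T *m Vt2) *m St2^T + S1 *m a11^T *m (U1^T *m Ut2) +
   (a12 *m (V2^T *m Vt2) *m St2^T + S1 *m a21^T *m (U2^T *m Ut2))).
  rewrite -D3 -K1 P12 /FU12 /F12; apply/matrixP => i j; rewrite !mxE /=.
  apply: fracK; rewrite -opprB oppr_eq0.
  apply: (@den_neq0 R _ (st r) (s r.-1)) => //.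
  - by apply: sdec; rewrite -ltnS prednK.
  - by apply: stdec; rewrite leq_addr.
have T4 : V1^T *m Vt2 = hadamard FV12 (S1^T *m a11 *m (V1^T *m Vt2) + a11^T *m (U1^T *m Ut2) *m St2 +
   (S1^T *m a12 *m (V2^T *m Vt2) + a21^T *m (U2^T *m Ut2) *m St2)).
  rewrite -D4 -K2 Q12 /FV12 /F12; apply/matrixP => i j; rewrite !mxE /=.
  apply: fracK; rewrite -opprB oppr_eq0.
  apply: (@den_neq0 R _ (st r) (s r.-1)) => //.
  - by apply: sdec; rewrite -ltnS prednK.
  - by apply: stdec; rewrite leq_addr.
split.
  apply: (neumann (fun Y Z => FopD Y Z) (fun a Y => FopZ a Y)) => //.
  rewrite /F /Fop /= col_mxKu col_mxKd add_col_mx /C1 /C2 -!hadD.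
  by rewrite -T1 -T2.
apply: (neumann (fun Y Z => GopD Y Z) (fun a Y => GopZ a Y)) => //.
rewrite /G /Gop /= row_mxKl row_mxKr add_row_mx /C3 /C4 -!hadD.
by rewrite -T3 -T4.
Qed.
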